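(* Let $\mathcal{M}_1$, $\mathcal{M}_2$ and $f$ be real-valued random variables with finite, strictly positive variances, and assume $\mathrm{Cov}[\mathcal{M}_1,f]\neq 0$ and $\mathrm{Cov}[\mathcal{M}_2,f]\neq 0$. Suppose $$\mathrm{Cov}[\mathcal{M}_1,\mathcal{M}_2]\neq \frac{\mathrm{Cov}[\mathcal{M}_2,f]\,\mathrm{Var}[\mathcal{M}_1]}{\mathrm{Cov}[\mathcal{M}_1,f]}\quad\text{and}\quad \mathrm{Cov}[\mathcal{M}_1,\mathcal{M}_2]\neq \frac{\mathrm{Cov}[\mathcal{M}_1,f]\,\mathrm{Var}[\mathcal{M}_2]}{\mathrm{Cov}[\mathcal{M}_2,f]}.$$ Then there exist $w_1,w_2\in\mathbb{R}$ such that $$\rho_{\mathrm{Pearson}}(w_1\mathcal{M}_1+w_2\mathcal{M}_2,\,f)>\max\big(\rho_{\mathrm{Pearson}}(\mathcal{M}_1,f),\,\rho_{\mathrm{Pearson}}(\mathcal{M}_2,f)\big).$$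
   Context: $\mathrm{Cov}[X,Y]$ and $\mathrm{Var}[X]$ denote covariance and variance, and $\rho_{\mathrm{Pearson}}(X,Y)=\mathrm{Cov}[X,Y]/\sqrt{\mathrm{Var}[X]\mathrm{Var}[Y]}$ is Pearson's correlation coefficient (defined whenever both variances are positive). In the paper's setting $\mathcal{M}_1,\mathcal{M}_2$ are two estimation metrics and $f$ the objective evaluation metric, viewed as functions on a finite set of neural architectures (i.e., random variables under the uniform distribution on that set). *)

(* Defs.v *)
From HB Require Import structures.
From mathcomp Require Import all_boot all_order all_algebra.
From mathcomp Require Import all_classical all_reals all_analysis.
Set Implicit Arguments. Unset Strict Implicit. Unset Printing Implicit Defensive.
Import Order.TTheory GRing.Theory Num.Theory.
Local Open Scope ring_scope.

(* It is only meaningful when both variances are finite and positive;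
   the theorem always assumes / asserts this explicitly. *)
Definition pearson d (T : measurableType d) (R : realType)
  (P : probability T R) (X Y : T -> R) : R :=
  fine (covariance P X Y) / Num.sqrt (fine (variance P X) * fine (variance P Y)).

(* Main.v *)
Require Import Defs.
From HB Require Import structures.
From mathcomp Require Import all_boot all_order all_algebra.
From mathcomp Require Import all_classical all_reals all_analysis.
From mathcomp Require Import ring lra.
Import Order.TTheory GRing.Theory Num.Theory.
Local Open Scope ring_scope.

Lemma cov_fin {d} {T : measurableType d} {R : realType} (P : probability T R) (X Y : T -> R) :
  X \in Lfun P 2%:E -> Y \in Lfun P 2%:E ->
  covariance P X Y = (fine (covariance P X Y))%:E.
Proof.
move=> X2 Y2.
have Pfin : (P setT \is a fin_num)%E := fin_num_measure P _ measurableT.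
rewrite fineK //; apply: covariance_fin_num.
- exact: Lfun_subset12.
- exact: Lfun_subset12.
- exact: Lfun2_mul_Lfun1.
Qed.

Lemma L2_lin {d} {T : measurableType d} {R : realType} (P : probability T R) a b (X Y : T -> R) :
  X \in Lfun P 2%:E -> Y \in Lfun P 2%:E -> (a \o* X \+ b \o* Y)%R \in Lfun P 2%:E.
Proof.
move=> X2 Y2.
have s : (1 <= 2 :> R) by rewrite ler1n.
have h1 : (a \o* X)%R \in Lfun P 2%:E by apply: Lfun_scale.
have h2 : (b \o* Y)%R \in Lfun P 2%:E by apply: Lfun_scale.
by rewrite rpredD ?lee1n.
Qed.

Lemma cov_lin {d} {T : measurableType d} {R : realType} (P : probability T R) a b (X Y Z : T -> R) :
  X \in Lfun P 2%:E -> Y \in Lfun P 2%:E -> Z \in Lfun P 2%:E ->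
  covariance P (a \o* X \+ b \o* Y)%R Z =
  (a * fine (covariance P X Z) + b * fine (covariance P Y Z))%:E.
Proof.
move=> X2 Y2 Z2.
have Pfin : (P setT \is a fin_num)%E := fin_num_measure P _ measurableT.
have s : (1 <= 2 :> R) by rewrite ler1n.
rewrite covarianceDl ?Lfun_scale //.
have X1 := Lfun_subset12 Pfin X2.
have Y1 := Lfun_subset12 Pfin Y2.
have Z1 := Lfun_subset12 Pfin Z2.
have XZ1 := Lfun2_mul_Lfun1 X2 Z2.
have YZ1 := Lfun2_mul_Lfun1 Y2 Z2.
rewrite covarianceZl // covarianceZl //.
by rewrite (cov_fin P _ _ X2 Z2) (cov_fin P _ _ Y2 Z2) /= -!EFinM -EFinD.
Qed.

Lemma fcov_l {d} {T : measurableType d} {R : realType} (P : probability T R) a b (X Y Z : T -> R) :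
  X \in Lfun P 2%:E -> Y \in Lfun P 2%:E -> Z \in Lfun P 2%:E ->
  fine (covariance P (a \o* X \+ b \o* Y)%R Z) =
  a * fine (covariance P X Z) + b * fine (covariance P Y Z).
Proof. by move=> X2 Y2 Z2; rewrite cov_lin. Qed.

Lemma fcov_r {d} {T : measurableType d} {R : realType} (P : probability T R) a b (X Y Z : T -> R) :
  X \in Lfun P 2%:E -> Y \in Lfun P 2%:E -> Z \in Lfun P 2%:E ->
  fine (covariance P Z (a \o* X \+ b \o* Y)%R) =
  a * fine (covariance P Z X) + b * fine (covariance P Z Y).
Proof.
by move=> X2 Y2 Z2; rewrite covarianceC cov_lin //= (covarianceC P X) (covarianceC P Y).
Qed.

#[local] Hint Resolve L2_lin : core.
Lemma cmp {R : rcfType} (a b x y : R) : 0 < x -> 0 < y -> 0 < b -> a^+2 * y < b^+2 * x ->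
  a / Num.sqrt x < b / Num.sqrt y.
Proof.
move=> x0 y0 b0 h.
have sx : 0 < Num.sqrt x by rewrite sqrtr_gt0.
have sy : 0 < Num.sqrt y by rewrite sqrtr_gt0.
have rhs : 0 < b / Num.sqrt y by rewrite divr_gt0.
case: (lerP a 0) => a0.
  by apply: le_lt_trans rhs; rewrite pmulr_lle0 // invr_gt0.
have e : forall c z : R, 0 <= c -> 0 < z -> c / Num.sqrt z = Num.sqrt (c^+2 / z).
  move=> c z c0 z0; rewrite sqrtrM ?sqr_ge0 // sqrtr_sqr ger0_norm //.
  by rewrite sqrtrV // ltW.
rewrite e ?ltW // e ?ltW // ltr_sqrt; last by rewrite divr_gt0 // exprn_gt0.
rewrite ltr_pdivrMr // mulrAC ltr_pdivlMr //.
Qed.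

Lemma key {R : rcfType} {V1 V2 Vf C c1 c2 : R} : 0 < V1 -> 0 < V2 -> 0 < Vf ->
  V1*c2 - C*c1 != 0 -> 0 < V1*V2 - C^+2 ->
  let w1 := V2*c1 - C*c2 in let w2 := V1*c2 - C*c1 in
  0 < (w1*(w1*V1 + w2*C) + w2*(w1*C + w2*V2)) /\
  c1 / Num.sqrt (V1*Vf) <
   (w1*c1 + w2*c2) / Num.sqrt ((w1*(w1*V1 + w2*C) + w2*(w1*C + w2*V2)) * Vf).
Proof.
move=> p1 p2 pf ne Dp w1 w2.
set D := V1*V2 - C^+2.
set q := w1*c1 + w2*c2.
have ev : w1*(w1*V1 + w2*C) + w2*(w1*C + w2*V2) = D * q by rewrite /D /q /w1 /w2; ring.
have eq1 : V1 * q = w2^+2 + c1^+2 * D by rewrite /D /q /w1 /w2; ring.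
have w2p : 0 < w2^+2 by rewrite lt_def sqr_ge0 andbT sqrf_eq0.
have qp : 0 < q.
  have : 0 < V1 * q by rewrite eq1; apply: ltr_pwDl => //; apply: mulr_ge0 => //; [exact: sqr_ge0 | exact: ltW].
  by rewrite pmulr_rgt0.
rewrite ev; split; first exact: mulr_gt0.
apply: cmp; rewrite ?mulr_gt0 //.
have : c1^+2 * D < V1 * q by rewrite eq1 ltrDr.
move=> h.
have -> : c1^+2 * (D*q*Vf) = (c1^+2*D)*(q*Vf) by ring.
have -> : q^+2*(V1*Vf) = (V1*q)*(q*Vf) by ring.
by rewrite ltr_pM2r ?mulr_gt0.
Qed.

Definition Qf {R : comRingType} (V1 V2 Vf C c1 c2 a b c : R) :=
  a*(a*V1 + b*C + c*c1) + b*(a*C + b*V2 + c*c2) + c*(a*c1 + b*c2 + c*Vf).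

Lemma Dpos {R : realFieldType} {V1 V2 Vf C c1 c2 : R} : 0 < V1 -> 0 < Vf ->
  V1*c2 - C*c1 != 0 -> (forall a b c, 0 <= Qf V1 V2 Vf C c1 c2 a b c) ->
  0 < V1*V2 - C^+2.
Proof.
move=> p1 pf ne Q.
set D := V1*V2 - C^+2; set e := V1*c2 - C*c1.
have D0 : 0 <= D.
  have := Q (-C) V1 0; rewrite /Qf.
  have -> : -C * (-C * V1 + V1 * C + 0 * c1) + V1 * (-C * C + V1 * V2 + 0 * c2) +
    0 * (-C * c1 + V1 * c2 + 0 * Vf) = V1 * D by rewrite /D; ring.
  by rewrite pmulr_rge0.
rewrite lt_def D0 andbT; apply/negP => /eqP D00.
set t := - Vf / e.
have te : t * e = - Vf by rewrite /t mulrVK // unitfE.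
have := Q (-C * t) (V1 * t) 1; rewrite /Qf.
have -> : -C * t * (-C * t * V1 + V1 * t * C + 1 * c1) + V1 * t * (-C * t * C + V1 * t * V2 + 1 * c2) +
    1 * (-C * t * c1 + V1 * t * c2 + 1 * Vf) = t^+2 * V1 * D + 2 * (t * e) + Vf by rewrite /D /e; ring.
rewrite D00 te; lra.
Qed.

Lemma final {R : rcfType} {V1 V2 Vf C c1 c2 : R} : 0 < V1 -> 0 < V2 -> 0 < Vf ->
  V1*c2 - C*c1 != 0 -> V2*c1 - C*c2 != 0 ->
  (forall a b c, 0 <= Qf V1 V2 Vf C c1 c2 a b c) ->
  let w1 := V2*c1 - C*c2 in let w2 := V1*c2 - C*c1 in
  0 < (w1*(w1*V1 + w2*C) + w2*(w1*C + w2*V2)) /\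
  Num.max (c1 / Num.sqrt (V1*Vf)) (c2 / Num.sqrt (V2*Vf)) <
   (w1*c1 + w2*c2) / Num.sqrt ((w1*(w1*V1 + w2*C) + w2*(w1*C + w2*V2)) * Vf).
Proof.
move=> p1 p2 pf e1 e2 Q w1 w2.
have Dp := Dpos p1 pf e1 Q.
have [K1 K1'] := key p1 p2 pf e1 Dp.
have Dp' : 0 < V2 * V1 - C^+2 by rewrite mulrC.
have [K2 K2'] := key p2 p1 pf e2 Dp'.
rewrite /= in K1 K1' K2 K2'.
split; first exact: K1.
rewrite gt_max; apply/andP; split; first exact: K1'.
move: K2'.
have -> : (V1 * c2 - C * c1) * c2 + (V2 * c1 - C * c2) * c1 = w1*c1 + w2*c2 by rewrite /w1 /w2; ring.
have -> : (V1 * c2 - C * c1) * ((V1 * c2 - C * c1) * V2 + (V2 * c1 - C * c2) * C) +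
   (V2 * c1 - C * c2) * ((V1 * c2 - C * c1) * C + (V2 * c1 - C * c2) * V1)
   = w1*(w1*V1 + w2*C) + w2*(w1*C + w2*V2) by rewrite /w1 /w2; ring.
done.
Qed.

Theorem proposition1 (d : measure_display) (T : measurableType d) (R : realType)
  (P : probability T R) (M1 M2 f : T -> R) :
  M1 \in Lfun P 2%:E -> M2 \in Lfun P 2%:E -> f \in Lfun P 2%:E ->
  (0 < variance P M1)%E -> (0 < variance P M2)%E -> (0 < variance P f)%E ->
  fine (covariance P M1 f) != 0 -> fine (covariance P M2 f) != 0 ->
  fine (covariance P M1 M2) !=
    fine (covariance P M2 f) * fine (variance P M1) / fine (covariance P M1 f) ->
  fine (covariance P M1 M2) !=
    fine (covariance P M1 f) * fine (variance P M2) / fine (covariance P M2 f) ->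
  exists w1 w2 : R,
    (0 < variance P (w1 \o* M1 \+ w2 \o* M2)%R)%E /\
    pearson P (w1 \o* M1 \+ w2 \o* M2)%R f >
      Num.max (pearson P M1 f) (pearson P M2 f).
Proof.
move=> h1 h2 hf v1p v2p vfp c1n c2n ne1 ne2.
have V1p : 0 < fine (variance P M1) by rewrite -lte_fin fineK ?variance_fin_num.
have V2p : 0 < fine (variance P M2) by rewrite -lte_fin fineK ?variance_fin_num.
have Vfp : 0 < fine (variance P f) by rewrite -lte_fin fineK ?variance_fin_num.
set V1 := fine (variance P M1) in ne1 ne2 V1p *.
set V2 := fine (variance P M2) in ne1 ne2 V2p *.
set Vf := fine (variance P f) in Vfp *.
set C := fine (covariance P M1 M2) in ne1 ne2 *.
set c1 := fine (covariance P M1 f) in c1n ne1 ne2 *.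
set c2 := fine (covariance P M2 f) in c2n ne1 ne2 *.
have e1 : V1 * c2 - C * c1 != 0.
  apply: contra ne1; rewrite subr_eq0 => /eqP E; apply/eqP; apply: (mulIf c1n).
  by rewrite divfK // -E mulrC.
have e2 : V2 * c1 - C * c2 != 0.
  apply: contra ne2; rewrite subr_eq0 => /eqP E; apply/eqP; apply: (mulIf c2n).
  by rewrite divfK // -E mulrC.
have Q : forall a b c, 0 <= Qf V1 V2 Vf C c1 c2 a b c.
  move=> a b c.
  have := variance_ge0 P (1 \o* (a \o* M1 \+ b \o* M2) \+ c \o* f)%R.
  have Z2 : (a \o* M1 \+ b \o* M2)%R \in Lfun P 2%:E by apply: L2_lin.
  have W2 : (1 \o* (a \o* M1 \+ b \o* M2) \+ c \o* f)%R \in Lfun P 2%:E by apply: L2_lin.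
  rewrite /variance cov_fin // => /fine_ge0 /= H.
  move: H; rewrite !(fcov_l, fcov_r) //.
  rewrite (covarianceC P M2 M1) (covarianceC P f M1) (covarianceC P f M2).
  move=> H; apply: (le_trans H); rewrite le_eqVlt; apply/orP; left; apply/eqP.
  rewrite /Qf /V1 /V2 /Vf /C /c1 /c2 /variance; ring.
have [K1 K2] := final V1p V2p Vfp e1 e2 Q.
rewrite /= in K1 K2.
exists (V2*c1 - C*c2), (V1*c2 - C*c1).
set w1 := V2*c1 - C*c2.
set w2 := V1*c2 - C*c1.
have covXf : fine (covariance P (w1 \o* M1 \+ w2 \o* M2)%R f) = w1*c1 + w2*c2.
  by rewrite fcov_l.
have X2 : (w1 \o* M1 \+ w2 \o* M2)%R \in Lfun P 2%:E by apply: L2_lin.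
have varX : fine (variance P (w1 \o* M1 \+ w2 \o* M2)%R) =
    w1*(w1*V1 + w2*C) + w2*(w1*C + w2*V2).
  rewrite /variance !(fcov_l, fcov_r) // ?(covarianceC P M2 M1).
  rewrite /V1 /V2 /C /variance; ring.
split.
  rewrite -[variance P _]fineK ?varX ?lte_fin //.
  by apply: variance_fin_num; apply: L2_lin.
by rewrite /pearson covXf varX.
Qed.
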